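(* Let $W,V$ be subspaces of $\mathbb{R}^n$ with $\mathbb{R}^n=W\oplus V^\perp$, where $W$ has dimension $d_W$. Suppose $\mu\in\mathcal{P}_2(W)$ is a probabilistic frame for $W$ with frame operator $\mathbf{S}_\mu$, and $T:W\to V$ is measurable such that $T_\#\mu$ is an oblique dual probabilistic frame of $\mu$ on $V$ with respect to the coupling $(\mathbf{Id},T)_\#\mu$, i.e. $T_\#\mu\in\mathcal{P}_2(V)$ and $\int_W\mathbf{x}\,T(\mathbf{x})^t\,d\mu(\mathbf{x})=\boldsymbol{\pi}_{WV^\perp}$. Then $$\int_W\int_W|\langle\mathbf{x},T(\mathbf{y})\rangle|^2\,d\mu(\mathbf{x})\,d\mu(\mathbf{y})\ge d_W,$$ and equality holds if and only if $T(\mathbf{y})=\boldsymbol{\pi}_{VW^\perp}\mathbf{S}_\mu^\dagger\mathbf{y}$ for $\mu$-almost all $\mathbf{y}\in W$.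
   Context: $\mathcal{P}_2(S)$ denotes Borel probability measures on $\mathbb{R}^n$ concentrated on the subspace $S$ with finite second moment. $\mu\in\mathcal{P}_2(W)$ is a probabilistic frame for $W$ if there exist $0<A\le B<\infty$ with $A\|\mathbf{x}\|^2\le\int_W|\langle\mathbf{x},\mathbf{y}\rangle|^2d\mu(\mathbf{y})\le B\|\mathbf{x}\|^2$ for all $\mathbf{x}\in W$; its frame operator is $\mathbf{S}_\mu=\int_W\mathbf{y}\mathbf{y}^td\mu(\mathbf{y})$, with Moore–Penrose inverse $\mathbf{S}_\mu^\dagger$. $T_\#\mu(E)=\mu(T^{-1}(E))$; $(\mathbf{Id},T)_\#\mu$ is the pushforward of $\mu$ under $\mathbf{x}\mapsto(\mathbf{x},T(\mathbf{x}))$. $\boldsymbol{\pi}_{WV^\perp}$ is the oblique projection onto $W$ along $V^\perp$ and $\boldsymbol{\pi}_{VW^\perp}$ the oblique projection onto $V$ along $W^\perp$. *)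

(* Defs.v *)
From HB Require Import structures.
From mathcomp Require Import all_boot all_order all_algebra.
From mathcomp Require Import all_classical all_reals all_analysis.

Set Implicit Arguments.
Unset Strict Implicit.
Unset Printing Implicit Defensive.

Import Order.TTheory GRing.Theory Num.Theory.
Import numFieldNormedType.Exports.
Local Open Scope classical_set_scope.
Local Open Scope ring_scope.

(* R^n is modelled by column vectors 'cV[R]_n, equipped with its Borel
   sigma-algebra (generated by the open sets of the product topology). *)
Definition Rn (R : realType) (n : nat) :=
  g_sigma_algebraType (@open 'M[R]_(n, 1)).

Definition dotv (R : realType) (n : nat) (x y : 'cV[R]_n) : R :=
  \sum_(i < n) x i 0 * y i 0.

Definition orth (R : realType) (n : nat) (V : {vspace 'cV[R]_n}) : set 'cV[R]_n :=
  [set x | forall v, v \in V -> dotv x v = 0].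

Definition direct_sum_whole (R : realType) (n : nat)
    (W : {vspace 'cV[R]_n}) (U : set 'cV[R]_n) : Prop :=
  (forall z : 'cV[R]_n, exists w u, w \in W /\ U u /\ z = w + u) /\
  (forall x : 'cV[R]_n, x \in W -> U x -> x = 0).

Definition oblique_proj (R : realType) (n : nat)
    (P : 'M[R]_n) (W : {vspace 'cV[R]_n}) (U : set 'cV[R]_n) : Prop :=
  forall z : 'cV[R]_n, (P *m z) \in W /\ U (z - P *m z).

Definition moore_penrose (R : realType) (n : nat) (A Ad : 'M[R]_n) : Prop :=
  [/\ A *m Ad *m A = A, Ad *m A *m Ad = Ad,
      (A *m Ad)^T = A *m Ad & (Ad *m A)^T = Ad *m A].

Definition mx_integral (R : realType) (n : nat)
    (mu : {measure set (Rn R n) -> \bar R}) (D : set (Rn R n))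
    (f : Rn R n -> 'M[R]_n) : 'M[R]_n :=
  \matrix_(i, j) Rintegral mu D (fun x => f x i j).

Definition in_P2 (R : realType) (n : nat) (mu : probability (Rn R n) R)
    (W : {vspace 'cV[R]_n}) : Prop :=
  mu [set x : Rn R n | x \in W] = 1%E /\
  mu.-integrable setT (fun y : Rn R n => (dotv y y)%:E).

Definition prob_frame (R : realType) (n : nat) (mu : probability (Rn R n) R)
    (W : {vspace 'cV[R]_n}) : Prop :=
  exists A B : R, 0 < A /\ A <= B /\
    forall x : 'cV[R]_n, x \in W ->
      ((A * dotv x x)%:E <= \int[mu]_(y in [set y : Rn R n | y \in W]) ((dotv x y) ^+ 2)%:E)%E /\
      (\int[mu]_(y in [set y : Rn R n | y \in W]) ((dotv x y) ^+ 2)%:E <= (B * dotv x x)%:E)%E.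

Definition frame_op (R : realType) (n : nat) (mu : probability (Rn R n) R)
    (W : {vspace 'cV[R]_n}) : 'M[R]_n :=
  mx_integral mu [set y : Rn R n | y \in W] (fun y => y *m y^T).

(* Main.v *)
Require Import Defs.
From HB Require Import structures.
From mathcomp Require Import all_boot all_order all_algebra.
From mathcomp Require Import all_classical all_reals all_analysis.

Import Order.TTheory GRing.Theory Num.Theory.
Import numFieldNormedType.Exports.
Local Open Scope classical_set_scope.
Local Open Scope ring_scope.

From mathcomp Require Import lra ring.

Lemma col_delta (R : realType) m n (M : 'M[R]_(m, n)) (i : 'I_m) (j : 'I_n) :
  (M *m (delta_mx j ord0 : 'cV[R]_n)) i ord0 = M i j.
Proof.
rewrite mxE (bigD1 j) //= big1 ?addr0; first by rewrite mxE !eqxx mulr1.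
by move=> k kj; rewrite mxE (negbTE kj) mulr0.
Qed.

Arguments col_delta {R m n}.

Lemma mx_ext_col (R : realType) n (A B : 'M[R]_n) :
  (forall z : 'cV[R]_n, A *m z = B *m z) -> A = B.
Proof.
move=> H; apply/matrixP => i j.
by rewrite -(col_delta A i j) -(col_delta B i j) H.
Qed.

Lemma dotvC (R : realType) n (x y : 'cV[R]_n) : dotv x y = dotv y x.
Proof. by apply: eq_bigr => i _; rewrite mulrC. Qed.

Lemma dotv_mx (R : realType) n (x y : 'cV[R]_n) : dotv x y = (x^T *m y) 0 0.
Proof. by rewrite mxE; apply: eq_bigr => i _; rewrite mxE. Qed.

Lemma dotvDr (R : realType) n (x y z : 'cV[R]_n) :
  dotv x (y + z) = dotv x y + dotv x z.
Proof. by rewrite /dotv -big_split; apply: eq_bigr => i _; rewrite mxE mulrDr. Qed.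

Lemma dotv0r (R : realType) n (x : 'cV[R]_n) : dotv x 0 = 0.
Proof. by rewrite /dotv big1 // => i _; rewrite mxE mulr0. Qed.

Lemma dotv_ge0 (R : realType) n (x : 'cV[R]_n) : 0 <= dotv x x.
Proof. by apply: sumr_ge0 => i _; rewrite -expr2 sqr_ge0. Qed.

Lemma dotv_eq0 (R : realType) n (x : 'cV[R]_n) : dotv x x = 0 -> x = 0.
Proof.
move=> /eqP; rewrite psumr_eq0; last by move=> i _; rewrite -expr2 sqr_ge0.
move=> /allP H; apply/matrixP => i j; rewrite (ord1 j) mxE.
have := H i (mem_index_enum i); rewrite -expr2 sqrf_eq0 => /eqP ->.
done.
Qed.

Lemma PWV_id (R : realType) n (W V : {vspace 'cV[R]_n}) (P : 'M[R]_n) :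
  direct_sum_whole W (orth V) -> oblique_proj P W (orth V) ->
  forall w, w \in W -> P *m w = w.
Proof.
move=> [_ hWV] hP w wW.
have [PwW Pwo] := hP w.
have : w - P *m w = 0 by apply: hWV => //; exact: memvB.
by move/eqP; rewrite subr_eq0 => /eqP {2}->.
Qed.

Lemma PVW_fix (R : realType) n (W V : {vspace 'cV[R]_n}) (P : 'M[R]_n) :
  oblique_proj P V (orth W) -> forall x, x \in W -> x^T *m P = x^T.
Proof.
move=> hP x xW; apply/matrixP => i j; rewrite (ord1 i).
pose e : 'cV[R]_n := delta_mx j ord0.
have [_ /(_ x xW)] := hP e.
rewrite dotvC dotv_mx mulmxBr => H0.
have H : (x^T *m e) 0 0 = (x^T *m (P *m e)) 0 0.
  apply/eqP; rewrite -subr_eq0; apply/eqP; rewrite -H0.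
  by rewrite [in RHS]mxE; congr (_ + _); rewrite [RHS]mxE.
rewrite -[LHS](col_delta (x^T *m P) _ j) -mulmxA -/e -H.
by rewrite col_delta.
Qed.

Lemma VWperp (R : realType) n (W V : {vspace 'cV[R]_n}) (z : 'cV[R]_n) :
  direct_sum_whole W (orth V) -> z \in V ->
  (forall w, w \in W -> dotv z w = 0) -> z = 0.
Proof.
move=> [hWV _] zV hz.
have [w [u [wW [uo zE]]]] := hWV z.
apply: dotv_eq0.
rewrite {2}zE dotvDr hz // add0r dotvC.
exact: uo.
Qed.

Lemma MP_facts (R : realType) n (S Sd : 'M[R]_n) :
  S^T = S -> moore_penrose S Sd ->
  [/\ Sd^T *m S = S *m Sd, S *m Sd^T *m S = S & S *m (S *m Sd) = S].
Proof.
move=> hS [h1 h2 h3 h4].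
have a : Sd^T *m S = S *m Sd by rewrite -{1}hS -trmx_mul h3.
have b : S *m Sd^T *m S = S.
  by rewrite -{1 2}hS -trmx_mul -trmx_mul mulmxA h1 hS.
split => //.
by rewrite -h3 trmx_mul hS mulmxA.
Qed.

Lemma mxsubE (R : realType) m n (A B : 'M[R]_(m, n)) i j :
  (A - B) i j = A i j - B i j.
Proof. by rewrite [LHS]mxE [X in _ + X]mxE. Qed.

Lemma mxaddE (R : realType) m n (A B : 'M[R]_(m, n)) i j :
  (A + B) i j = A i j + B i j.
Proof. by rewrite [LHS]mxE. Qed.

Lemma qform_decomp (R : realType) n (S Sd PVW : 'M[R]_n) (y t : 'cV[R]_n) :
  S^T = S -> S *m PVW = S -> Sd^T *m S = S *m Sd -> S *m (Sd *m y) = y ->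
  y^T *m PVW = y^T ->
  ((t - PVW *m (Sd *m y))^T *m S *m (t - PVW *m (Sd *m y))) 0 0 =
  (t^T *m S *m t) 0 0 - 2 * (y^T *m 1%:M *m t) 0 0 + (y^T *m Sd *m y) 0 0.
Proof.
move=> hS hSP hSd hy hyP.
set a := PVW *m (Sd *m y).
have hPS : PVW^T *m S = S by rewrite -{1}hS -trmx_mul hSP hS.
have yS : y^T *m (S *m Sd) = y^T.
  by apply: trmx_inj; rewrite !trmx_mul !trmxK hS hSd -mulmxA hy.
have aS : a^T *m S = y^T.
  by rewrite /a trmx_mul trmx_mul -!mulmxA hPS hSd yS.
have ya : y^T *m a = y^T *m Sd *m y by rewrite /a mulmxA hyP mulmxA.
have tSa : (t^T *m S *m a) 0 0 = (y^T *m 1%:M *m t) 0 0.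
  have E : forall M : 'M[R]_1, M 0 0 = M^T 0 0 by move=> M; rewrite mxE.
  by rewrite E (trmx_mul (t^T *m S) a) (trmx_mul t^T S) trmxK hS mulmxA aS mulmx1.
have tB : (t - a)^T = t^T - a^T by apply/matrixP => i j; rewrite !mxE.
rewrite tB mulmxBl aS !mulmxBl !mulmxBr !mxsubE tSa ya mulmx1; lra.
Qed.
Lemma coord_meas (R : realType) (n : nat) (i : 'I_n) (j : 'I_1) :
  measurable_fun setT (fun y : Rn R n => y i j).
Proof.
apply: (measurability _ (measurable_realfun.RGenOpens.measurableE R)).
move=> _ [_ [a [b ->]] <-].
rewrite setTI.
apply: sub_sigma_algebra.
apply: (@open_comp _ _ (fun y : 'M[R]_(n, 1) => y i j)).
  by move=> y _; exact: coord_continuous.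
exact: interval_open.
Qed.
Lemma Rint_sum d (T : measurableType d) (R : realType)
  (mu : {measure set T -> \bar R}) (D : set T) (I : Type) (s : seq I)
  (P : pred I) (F : I -> T -> R) :
  measurable D -> (forall i, mu.-integrable D (EFin \o F i)) ->
  mu.-integrable D (EFin \o (fun x => \sum_(i <- s | P i) F i x)) /\
  Rintegral mu D (fun x => \sum_(i <- s | P i) F i x) =
    \sum_(i <- s | P i) Rintegral mu D (F i).
Proof.
move=> mD hF; elim: s => [|a s [ih1 ih2]].
  split.
    under [X in _.-integrable _ X]eq_fun do rewrite big_nil.
    exact: integrable0.
  rewrite big_nil; under eq_Rintegral do rewrite big_nil.
  by rewrite /Rintegral integral0.
case: (boolP (P a)) => Pa.
  split.
    under [X in _.-integrable _ X]eq_fun do rewrite big_cons Pa EFinD.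
    exact: (integrableD mD (hF a) ih1).
  rewrite big_cons Pa -ih2 -RintegralD //.
  by apply: eq_Rintegral => x _; rewrite big_cons Pa.
split.
  by under [X in _.-integrable _ X]eq_fun do rewrite big_cons (negbTE Pa).
rewrite big_cons (negbTE Pa) -ih2.
by apply: eq_Rintegral => x _; rewrite big_cons (negbTE Pa).
Qed.

Lemma int_scale d (T : measurableType d) (R : realType)
  (mu : {measure set T -> \bar R}) (D : set T) (k : R) (f : T -> R) :
  measurable D ->
  mu.-integrable D (EFin \o f) -> mu.-integrable D (EFin \o (fun x => k * f x)).
Proof.
move=> mD h; under [X in _.-integrable _ X]eq_fun do rewrite EFinM.
exact: (integrableZl mD k h).
Qed.

Lemma int_prod d (T : measurableType d) (R : realType)
  (mu : {measure set T -> \bar R}) (D : set T) (f g : T -> R) :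
  measurable D -> measurable_fun D f -> measurable_fun D g ->
  mu.-integrable D (EFin \o (fun x => f x ^+ 2)) ->
  mu.-integrable D (EFin \o (fun x => g x ^+ 2)) ->
  mu.-integrable D (EFin \o (fun x => f x * g x)).
Proof.
move=> mD mf mg hf hg.
apply: (@le_integrable _ _ _ mu D mD _ (EFin \o (fun x => f x ^+ 2 + g x ^+ 2))).
- by apply/measurable_realfun.measurable_EFinP; exact: measurable_realfun.measurable_funM.
- move=> x _ /=; rewrite lee_fin.
  rewrite [X in _ <= X]ger0_norm ?addr_ge0 ?sqr_ge0 // normrM.
  rewrite -[f x ^+ 2]real_normK ?num_real // -[g x ^+ 2]real_normK ?num_real //.
  have := sqr_ge0 (`|f x| - `|g x|).
  have := normr_ge0 (f x); have := normr_ge0 (g x).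
  move: `|f x| `|g x| => a b ha hb h; nra.
- under [X in _.-integrable _ X]eq_fun do rewrite EFinD.
  exact: (integrableD mD hf hg).
Qed.

Lemma qform_expand (R : realType) n (u v : 'cV[R]_n) (M : 'M[R]_n) :
  (u^T *m M *m v) 0 0 = \sum_i \sum_j u i 0 * M i j * v j 0.
Proof.
rewrite mxE; under eq_bigr do rewrite mxE big_distrl.
rewrite exchange_big /=; apply: eq_bigr => i _; apply: eq_bigr => j _.
by rewrite !mxE.
Qed.

Lemma bf_int d (T : measurableType d) (R : realType)
  (mu : {measure set T -> \bar R}) (D : set T) n (g h : T -> 'cV[R]_n)
  (M : 'M[R]_n) :
  measurable D ->
  (forall i j, mu.-integrable D (EFin \o (fun x => g x i 0 * h x j 0))) ->
  mu.-integrable D (EFin \o (fun x => ((g x)^T *m M *m h x) 0 0)) /\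
  Rintegral mu D (fun x => ((g x)^T *m M *m h x) 0 0) =
    \sum_i \sum_j M i j * Rintegral mu D (fun x => g x i 0 * h x j 0).
Proof.
move=> mD hgh.
have E : (fun x => ((g x)^T *m M *m h x) 0 0) =
   (fun x => \sum_(i <- index_enum 'I_n | true)
     \sum_(j <- index_enum 'I_n | true) M i j * (g x i 0 * h x j 0)).
  apply: funext => x; rewrite qform_expand; apply: eq_bigr => i _.
  by apply: eq_bigr => j _; rewrite mulrCA mulrA.
have inner : forall i, 
  mu.-integrable D (EFin \o (fun x => \sum_(j <- index_enum 'I_n | true) M i j * (g x i 0 * h x j 0))) /\
  Rintegral mu D (fun x => \sum_(j <- index_enum 'I_n | true) M i j * (g x i 0 * h x j 0)) =
    \sum_j M i j * Rintegral mu D (fun x => g x i 0 * h x j 0).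
  move=> i.
  have [h1 h2] := @Rint_sum _ _ _ mu D _ (index_enum 'I_n) xpredT
     (fun j x => M i j * (g x i 0 * h x j 0)) mD
     (fun j => @int_scale _ _ _ mu D (M i j) _ mD (hgh i j)).
  split => //; rewrite h2; apply: eq_bigr => j _.
  by rewrite RintegralZl.
rewrite E.
have [h1 h2] := @Rint_sum _ _ _ mu D _ (index_enum 'I_n) xpredT
  (fun i x => \sum_(j <- index_enum 'I_n | true) M i j * (g x i 0 * h x j 0)) mD
  (fun i => (inner i).1).
split => //; rewrite h2; apply: eq_bigr => i _.
exact: (inner i).2.
Qed.
Lemma trace_proj (R : fieldType) n (W : {vspace 'cV[R]_n}) (P : 'M[R]_n) :
  (forall z, P *m z \in W) -> (forall w, w \in W -> P *m w = w) ->
  \tr P = (\dim W)%:R.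
Proof.
move=> PW Pid.
set b := vbasis W.
pose B : 'M[R]_(n, \dim W) := \matrix_(i, k) (b`_k) i 0.
pose C : 'M[R]_(\dim W, n) := \matrix_(k, j) coord b k (P *m (delta_mx j ord0 : 'cV[R]_n)).
have BC : B *m C = P.
  apply/matrixP => i j; rewrite !mxE.
  have -> : P i j = (P *m (delta_mx j ord0 : 'cV[R]_n)) i 0.
    rewrite mxE (bigD1 j) //= big1 ?addr0; first by rewrite mxE !eqxx mulr1.
    by move=> k kj; rewrite mxE (negbTE kj) mulr0.
  rewrite {1}(coord_vbasis (PW ((delta_mx j ord0 : 'cV[R]_n)))) summxE.
  by apply: eq_bigr => k _; rewrite !mxE mulrC.
have bW : forall l : 'I_(\dim W), b`_l \in W.
  by move=> l; apply: vbasis_mem; apply: mem_nth; rewrite size_tuple.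
have CB : C *m B = 1%:M.
  apply/matrixP => k l; rewrite !mxE.
  have -> : \sum_j C k j * B j l = coord b k (P *m b`_l).
    have -> : b`_l = \sum_j (b`_l j 0) *: (delta_mx j ord0 : 'cV[R]_n).
      apply/matrixP => i z; rewrite (ord1 z) summxE.
      rewrite (bigD1 i) //= big1 ?addr0; first by rewrite !mxE !eqxx mulr1.
      by move=> k' ki; rewrite !mxE eq_sym (negbTE ki) mulr0.
    rewrite mulmx_sumr linear_sum /=; apply: eq_bigr => j _.
    by rewrite -scalemxAr linearZ /= !mxE mulrC.
  by rewrite Pid ?bW // coord_free ?(basis_free (vbasisP W)) // eq_sym.
by rewrite -BC mxtrace_mulC CB mxtrace1.
Qed.

Lemma Rint_EFin d (T : measurableType d) (R : realType)
  (mu : {measure set T -> \bar R}) (D : set T) (f : T -> R) :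
  measurable D -> mu.-integrable D (EFin \o f) ->
  (\int[mu]_(x in D) (f x)%:E = (Rintegral mu D f)%:E)%E.
Proof. by move=> mD h; rewrite /Rintegral fineK //; exact: integrable_fin_num. Qed.

Lemma coord_le_dotv (R : realType) n (x : 'cV[R]_n) i : x i 0 ^+ 2 <= dotv x x.
Proof.
rewrite /dotv (bigD1 i) //= -expr2 lerDl.
by apply: sumr_ge0 => j _; rewrite -expr2 sqr_ge0.
Qed.

Arguments PWV_id {R n W V P}.
Arguments PVW_fix {R n W V P}.
Arguments VWperp {R n W V z}.
Arguments MP_facts {R n S Sd}.
Arguments qform_decomp {R n S Sd PVW y t}.
Arguments trace_proj {R n W P}.
Arguments Rint_sum {d T R mu D I s P F}.
Arguments int_prod {d T R mu D f g}.
Arguments int_scale {d T R mu D} k {f}.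
Arguments bf_int {d T R mu D n} g h M.
Arguments Rint_EFin {d T R mu D f}.

Theorem theorem5p3 (R : realType) (n : nat)
    (W V : {vspace 'cV[R]_n})
    (hWV : direct_sum_whole W (orth V))
    (PWV : 'M[R]_n) (hPWV : oblique_proj PWV W (orth V))
    (PVW : 'M[R]_n) (hPVW : oblique_proj PVW V (orth W))
    (mu : probability (Rn R n) R)
    (hmu : in_P2 mu W) (hframe : prob_frame mu W)
    (Sd : 'M[R]_n) (hSd : moore_penrose (frame_op mu W) Sd)
    (T : Rn R n -> Rn R n)
    (hTmeas : measurable_fun [set x : Rn R n | x \in W] T)
    (hTV : forall x : 'cV[R]_n, x \in W -> T x \in V)
    (hT2 : mu.-integrable [set x : Rn R n | x \in W] (fun x => (dotv (T x) (T x))%:E))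
    (hdual : mx_integral mu [set x : Rn R n | x \in W] (fun x => x *m (T x)^T) = PWV) :
  ((\dim W)%:R%:E <=
     \int[mu]_(y in [set y : Rn R n | y \in W])
       (\int[mu]_(x in [set x : Rn R n | x \in W]) ((dotv x (T y)) ^+ 2)%R%:E)%E)%E /\
  ((\int[mu]_(y in [set y : Rn R n | y \in W])
       (\int[mu]_(x in [set x : Rn R n | x \in W]) ((dotv x (T y)) ^+ 2)%R%:E)%E)%E
     = (\dim W)%:R%:E <->
   {ae mu, forall y : Rn R n, y \in W -> T y = PVW *m (Sd *m y)}).
Proof.
set D := [set y : Rn R n | y \in W].
set S := frame_op mu W.
have PWVid := PWV_id hWV hPWV.
have PWVW : forall z, PWV *m z \in W := fun z => (hPWV z).1.
have inW : forall y : 'cV[R]_n, (y \in W) = (PWV *m y == y).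
  by move=> y; apply/idP/eqP => [/PWVid //|<-]; exact: PWVW.
have mD : measurable D.
  pose g := fun y : Rn R n => \sum_i ((PWV *m y) i 0 - y i 0) ^+ 2.
  have mg : measurable_fun setT g.
    apply: measurable_sum => i.
    apply: measurable_realfun.measurable_funX.
    apply: measurable_realfun.measurable_funB; last exact: coord_meas.
    rewrite /=; under eq_fun do rewrite mxE.
    apply: measurable_sum => k; apply: measurable_realfun.measurable_funM.
      exact: measurable_cst.
    exact: coord_meas.
  have -> : D = g @^-1` [set 0].
    apply/seteqP; split => y /=.
      move=> yW; rewrite /g big1 // => i _; rewrite PWVid // subrr expr2 mulr0.
      done.
    move=> /eqP; rewrite psumr_eq0 => [/allP H|i _]; last exact: sqr_ge0.
    rewrite /D /= inW; apply/eqP/matrixP => i j; rewrite (ord1 j).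
    by have := H i (mem_index_enum i); rewrite sqrf_eq0 subr_eq0 => /eqP.
  by have := mg measurableT [set 0] (measurable_set1 0); rewrite setTI.
have mc : forall i, measurable_fun D (fun y : Rn R n => y i 0).
  by move=> i; apply: (measurable_funS measurableT (@subsetT _ D)); exact: coord_meas.
have mt : forall i, measurable_fun D (fun y : Rn R n => T y i 0).
  by move=> i; exact: (measurableT_comp (coord_meas R n i 0) hTmeas).
have i2y : forall i, mu.-integrable D (EFin \o (fun y : Rn R n => y i 0 ^+ 2)).
  move=> i; apply: (le_integrable mD _ _ (integrableS measurableT mD (@subsetT _ D) hmu.2)).
    by apply/measurable_realfun.measurable_EFinP; exact: measurable_realfun.measurable_funX.
  move=> y _ /=; rewrite !ger0_norm ?lee_fin ?sqr_ge0 ?dotv_ge0 //.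
  exact: coord_le_dotv.
have i2t : forall i, mu.-integrable D (EFin \o (fun y : Rn R n => T y i 0 ^+ 2)).
  move=> i; apply: (le_integrable mD _ _ hT2).
    by apply/measurable_realfun.measurable_EFinP; exact: measurable_realfun.measurable_funX.
  move=> y _ /=; rewrite !ger0_norm ?lee_fin ?sqr_ge0 ?dotv_ge0 //.
  exact: coord_le_dotv.
have iyy : forall i j, mu.-integrable D (EFin \o (fun y : Rn R n => y i 0 * y j 0)).
  by move=> i j; apply: int_prod.
have iyt : forall i j, mu.-integrable D (EFin \o (fun y : Rn R n => y i 0 * T y j 0)).
  by move=> i j; apply: int_prod.
have itt : forall i j, mu.-integrable D (EFin \o (fun y : Rn R n => T y i 0 * T y j 0)).
  by move=> i j; apply: int_prod.
have SE : forall i j, S i j = Rintegral mu D (fun x => x i 0 * x j 0).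
  move=> i j; rewrite /S /frame_op /mx_integral mxE.
  by apply: eq_Rintegral => x _; rewrite mxE big_ord1 mxE.
have PE : forall i j, PWV i j = Rintegral mu D (fun x => x i 0 * T x j 0).
  move=> i j; rewrite -hdual /mx_integral mxE.
  by apply: eq_Rintegral => x _; rewrite mxE big_ord1 mxE.
have Ssym : forall i j, S j i = S i j.
  by move=> i j; rewrite !SE; apply: eq_Rintegral => x _; rewrite mulrC.
have hS : S^T = S by apply/matrixP => i j; rewrite mxE Ssym.
have F6 : forall z : 'cV[R]_n,
    (\int[mu]_(x in D) ((dotv x z) ^+ 2)%:E = ((z^T *m S *m z) 0 0)%:E)%E.
  move=> z.
  have [h1 h2] := @bf_int _ _ _ mu D n (fun x : Rn R n => x : 'cV[R]_n)
     (fun x => x) (z *m z^T) mD iyy.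
  transitivity (\int[mu]_(x in D) (((x : 'cV[R]_n)^T *m (z *m z^T) *m x) 0 0)%:E)%E.
    apply: eq_integral => x _; congr EFin.
    rewrite qform_expand expr2 /dotv big_distrl; apply: eq_bigr => i _ /=.
    rewrite big_distrr; apply: eq_bigr => j _ /=.
    by rewrite !mxE big_ord1 !mxE; ring.
  rewrite (Rint_EFin mD h1) h2; congr EFin.
  rewrite qform_expand; apply: eq_bigr => i _; apply: eq_bigr => j _.
  by rewrite -SE !mxE big_ord1 !mxE; ring.
have qS_ge0 : forall z : 'cV[R]_n, 0 <= (z^T *m S *m z) 0 0.
  move=> z; rewrite -lee_fin -F6; apply: integral_ge0 => x _.
  by rewrite lee_fin sqr_ge0.
have frameW : forall w, w \in W -> (w^T *m S *m w) 0 0 = 0 -> w = 0.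
  move=> w wW h0; case: hframe => A [B [A0 [_ hAB]]].
  have [h _] := hAB w wW.
  have E : (\int[mu]_(y in D) ((dotv w y) ^+ 2)%:E = ((w^T *m S *m w) 0 0)%:E)%E.
    by rewrite -F6; apply: eq_integral => y _; rewrite dotvC.
  move: h; rewrite E h0 lee_fin pmulr_rle0 // => h.
  by apply: dotv_eq0; apply/le_anti; rewrite h dotv_ge0.
have F2 : PWV *m S = S.
  apply/matrixP => i j; rewrite mxE SE.
  transitivity (Rintegral mu D (fun x => \sum_k PWV i k * (x k 0 * x j 0))).
    have [_ ->] := @Rint_sum _ _ _ mu D _ (index_enum 'I_n) xpredT
      (fun k (x : Rn R n) => PWV i k * (x k 0 * x j 0)) mD
      (fun k => int_scale (PWV i k) mD (iyy k j)).
    by apply: eq_bigr => k _; rewrite SE RintegralZl.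
  apply: eq_Rintegral => x; rewrite inE /= => xW.
  have := PWVid x xW; move/(congr1 (fun M : 'cV[R]_n => M i 0)); rewrite mxE => E.
  by rewrite -[in RHS]E big_distrl /=; apply: eq_bigr => k _; rewrite mulrA.
have F3 : S *m PVW = S.
  apply/matrixP => i j; rewrite mxE SE.
  transitivity (Rintegral mu D (fun x => \sum_k PVW k j * (x i 0 * x k 0))).
    have [_ ->] := @Rint_sum _ _ _ mu D _ (index_enum 'I_n) xpredT
      (fun k (x : Rn R n) => PVW k j * (x i 0 * x k 0)) mD
      (fun k => int_scale (PVW k j) mD (iyy i k)).
    by apply: eq_bigr => k _; rewrite SE RintegralZl // mulrC.
  apply: eq_Rintegral => x; rewrite inE /= => xW.
  have := PVW_fix hPVW x xW; move/(congr1 (fun M : 'rV[R]_n => M 0 j)); rewrite mxE => E.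
  rewrite mxE in E; rewrite -[in RHS]E big_distrr /=; apply: eq_bigr => k _.
  by rewrite mxE; ring.
have [hSdS hSSdS hSSSd] := MP_facts hS hSd.
have F7 : forall y, y \in W -> S *m (Sd *m y) = y.
  move=> y yW.
  set u := y - S *m (Sd *m y).
  have uW : u \in W.
    by apply: memvB => //; rewrite -F2 -mulmxA; exact: PWVW.
  have Su : S *m u = 0 by rewrite mulmxBr (mulmxA S Sd) mulmxA hSSSd subrr.
  have : u = 0 by apply: frameW => //; rewrite -mulmxA Su mulmx0 mxE.
  by move/eqP; rewrite subr_eq0 => /eqP <-.
have trP : \tr PWV = (\dim W)%:R := trace_proj PWVW PWVid.
have trSdS : \tr (Sd *m S) = (\dim W)%:R.
  rewrite mxtrace_mulC.
  have E1 : S *m Sd = PWV *m (S *m Sd) by rewrite mulmxA F2.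
  rewrite E1 mxtrace_mulC.
  have E2 : S *m Sd *m PWV = PWV.
    by apply: mx_ext_col => z; rewrite -!mulmxA F7 // PWVW.
  by rewrite E2.
pose qt := fun y : Rn R n => ((T y)^T *m S *m T y) 0 0.
pose bt := fun y : Rn R n => ((y : 'cV[R]_n)^T *m 1%:M *m T y) 0 0.
pose bs := fun y : Rn R n => ((y : 'cV[R]_n)^T *m Sd *m y) 0 0.
pose a := fun y : Rn R n => PVW *m (Sd *m y).
pose qe := fun y : Rn R n => ((T y - a y)^T *m S *m (T y - a y)) 0 0.
have [it1 _] := @bf_int _ _ _ mu D n T T S mD itt.
have [ib1 ib2] := @bf_int _ _ _ mu D n (fun x : Rn R n => x : 'cV[R]_n) T 1%:M mD iyt.
have [is1 is2] := @bf_int _ _ _ mu D n (fun x : Rn R n => x : 'cV[R]_n)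
   (fun x => x) Sd mD iyy.
have Rbt : Rintegral mu D bt = (\dim W)%:R.
  rewrite /bt ib2 -trP /mxtrace; apply: eq_bigr => i _.
  rewrite (bigD1 i) //= big1 ?addr0 => [|j ji].
    by rewrite -PE mxE eqxx mul1r.
  by rewrite mxE eq_sym (negbTE ji) mul0r.
have Rbs : Rintegral mu D bs = (\dim W)%:R.
  rewrite /bs is2 -trSdS /mxtrace; apply: eq_bigr => i _.
  rewrite mxE; apply: eq_bigr => j _.
  by rewrite -SE Ssym.
have qeE : forall y, D y -> qe y = qt y - 2 * bt y + bs y.
  move=> y yW; rewrite /qe /a qform_decomp //.
    exact: F7.
  exact: PVW_fix hPVW y yW.
have icomb : mu.-integrable D (EFin \o (fun y => qt y - 2 * bt y + bs y)).
  apply: (eq_integrable mD _ _ _ (integrableD mD (integrableB mD it1 (int_scale 2 mD ib1)) is1)).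
  by move=> y _ /=; rewrite EFinD EFinB.
have ie : mu.-integrable D (EFin \o qe).
  apply: eq_integrable icomb => //= y; rewrite inE => yD.
  by rewrite qeE.
have Rqe : Rintegral mu D qe = Rintegral mu D qt - (\dim W)%:R.
  have -> : Rintegral mu D qe = Rintegral mu D (fun y => qt y - 2 * bt y + bs y).
    by apply: eq_Rintegral => y; rewrite inE => yD; exact: qeE.
  rewrite RintegralD //; last exact: (integrableB mD it1 (int_scale 2 mD ib1)).
  rewrite RintegralB //; last exact: (int_scale 2 mD ib1).
  rewrite RintegralZl // Rbt Rbs; ring.
have Eout : (\int[mu]_(y in D) (\int[mu]_(x in D) ((dotv x (T y)) ^+ 2)%:E)%E
    = (Rintegral mu D qt)%:E)%E.
  rewrite -(Rint_EFin mD it1); apply: eq_integral => y _.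
  exact: F6.
rewrite Eout.
have qe_ge0 : 0 <= Rintegral mu D qe.
  by apply: Rintegral_ge0 => y _; exact: qS_ge0.
have zV : forall z, z \in V -> (z^T *m S *m z) 0 0 = 0 -> z = 0.
  move=> z zV hz.
  set w := S *m (Sd *m z).
  have wW : w \in W by rewrite /w -F2 -mulmxA; exact: PWVW.
  have dx : forall x, x \in W -> dotv x w = dotv x z.
    move=> x xW; rewrite !dotv_mx /w !mulmxA.
    have -> : x^T *m S *m Sd = x^T.
      apply: trmx_inj; rewrite !trmx_mul trmxK hS.
      by rewrite mulmxA hSdS -mulmxA F7.
    done.
  have w0 : w = 0.
    apply: frameW => //.
    have : ((w^T *m S *m w) 0 0)%:E = 0%:E :> \bar R.
      rewrite -F6 -hz -F6; apply: eq_integral => x; rewrite inE => xW.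
      by rewrite dx.
    by case.
  apply: (VWperp hWV zV) => x xW.
  by rewrite dotvC -dx // w0 dotv0r.
split.
  by rewrite lee_fin; lra.
have key : ((Rintegral mu D qt)%:E = (\dim W)%:R%:E <->
    \int[mu]_(x in D) `|(qe x)%:E| = 0)%E.
  have -> : (\int[mu]_(x in D) `|(qe x)%:E| = \int[mu]_(x in D) (qe x)%:E)%E.
    by apply: eq_integral => y _ /=; rewrite ger0_norm //; exact: qS_ge0.
  rewrite (Rint_EFin mD ie); split => [[h]|[h]]; congr EFin; lra.
rewrite key (ae_eq_integral_abs mu mD (measurable_int _ ie)).
split => H.
  apply: filterS H => y /= Hy yW.
  have := Hy yW; rewrite /cst => -[] /zV.
  have eV : T y - a y \in V by apply: memvB; [exact: hTV|exact: (hPVW _).1].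
  by move=> /(_ eV) /eqP; rewrite subr_eq0 => /eqP.
apply: filterS H => y Hy yD.
by rewrite /= /qe /a (Hy yD) subrr mulmx0 mxE.
Qed.
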